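(* For each $i\in\{1,2\}$ let $s_i\in\mathbb{S}^1\subset\mathbb{R}^2$, $t_i\ge0$ and $w_i=(s_it_i,0)\in\mathbb{R}^3$. Then \[d_{\mathbb{H}}(w_1,w_2)\simeq|t_1-t_2|+(t_1\wedge t_2)|s_1-s_2|^{1/2},\] with universal implicit constants.
   Context: For $w=(x,y,z)$, $w'=(x',y',z')$, $d_{\mathbb{H}}(w,w')=|x-x'|+|y-y'|+|z-z'+\tfrac12(xy'-x'y)|^{1/2}$. $t_1\wedge t_2=\min\{t_1,t_2\}$. $a\simeq b$ means $C^{-1}b\le a\le Cb$ for a universal constant $C$. *)

(* Defs.v *)
From Stdlib Require Import Reals.
Open Scope R_scope.

Definition dH (w w' : R * R * R) : R :=
  let '(x, y, z) := w in
  let '(x', y', z') := w' in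
  Rabs (x - x') + Rabs (y - y') + sqrt (Rabs (z - z' + / 2 * (x * y' - x' * y))).

Definition norm2 (p : R * R) : R := sqrt (fst p ^ 2 + snd p ^ 2).

Definition on_S1 (s : R * R) : Prop := fst s ^ 2 + snd s ^ 2 = 1.

Definition lift (s : R * R) (t : R) : R * R * R := (fst s * t, snd s * t, 0).

(* Main.v *)
Require Import Defs.
From Stdlib Require Import Reals Lra Psatz.
Open Scope R_scope.

Lemma core (a b c d t1 t2 : R) :
  a^2 + b^2 = 1 -> c^2 + d^2 = 1 -> 0 <= t1 -> t1 <= t2 ->
  let E := Rabs (a * t1 - c * t2) + Rabs (b * t1 - d * t2) +
           sqrt (Rabs (0 - 0 + / 2 * (a * t1 * (d * t2) - c * t2 * (b * t1)))) in
  let B := (t2 - t1) + t1 * sqrt (sqrt ((a - c) * ((a - c) * 1) + (b - d) * ((b - d) * 1))) in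
  B <= 3 * E /\ E <= 4 * B.
Proof.
  intros Hs1 Hs2 Ht1 Ht12 E B.
  set (g := a*c + b*d). set (h := a*d - b*c).
  assert (Hgh : g^2 + h^2 = 1).
  { replace 1 with ((a^2+b^2)*(c^2+d^2)) by (rewrite Hs1, Hs2; ring). unfold g, h; ring. }
  set (D2 := (a - c) * ((a - c) * 1) + (b - d) * ((b - d) * 1)).
  assert (HD2 : D2 = 2 - 2*g).
  { transitivity ((a^2+b^2)+(c^2+d^2) - 2*g); [unfold D2, g; ring| rewrite Hs1, Hs2; ring]. }
  assert (Hg1 : g <= 1) by nra. assert (Hg2 : -1 <= g) by nra.
  assert (HD2p : 0 <= D2) by lra.
  set (D := sqrt D2).
  assert (HD : D*D = D2) by (apply sqrt_sqrt; lra).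
  assert (HD0 : 0 <= D) by apply sqrt_pos.
  assert (HD4 : D <= 2) by nra.
  set (r := sqrt D).
  assert (Hr : r*r = D) by (apply sqrt_sqrt; lra).
  assert (Hr0 : 0 <= r) by apply sqrt_pos.
  assert (Hr2 : r <= 3/2) by nra.
  set (e := t2 - t1). set (p := t1 * r).
  assert (He : 0 <= e) by (unfold e; lra).
  assert (Hp : 0 <= p) by (unfold p; nra).
  set (X := Rabs (a * t1 - c * t2)). set (Y := Rabs (b * t1 - d * t2)).
  assert (HX : X*X = (a * t1 - c * t2)^2) by (unfold X; rewrite <- Rabs_mult, Rabs_right; [ring| apply Rle_ge, Rle_0_sqr]).
  assert (HY : Y*Y = (b * t1 - d * t2)^2) by (unfold Y; rewrite <- Rabs_mult, Rabs_right; [ring| apply Rle_ge, Rle_0_sqr]).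
  assert (HX0 : 0 <= X) by apply Rabs_pos.
  assert (HY0 : 0 <= Y) by apply Rabs_pos.
  assert (HXY : X*X + Y*Y = e^2 + t1*(t1+e)*D2).
  { rewrite HX, HY, HD2. unfold e, g.
    replace ((a * t1 - c * t2) ^ 2 + (b * t1 - d * t2) ^ 2) with
      ((a^2+b^2)*t1^2 + (c^2+d^2)*t2^2 - 2*t1*t2*(a*c+b*d)) by ring.
    rewrite Hs1, Hs2. ring. }
  set (k := 0 - 0 + / 2 * (a * t1 * (d * t2) - c * t2 * (b * t1))).
  assert (Hk : Rabs k = t1 * t2 * Rabs h / 2).
  { replace k with ((t1*t2/2) * h) by (unfold k, h; field).
    rewrite Rabs_mult, Rabs_right; [lra|]. apply Rle_ge. assert (0 <= t1*t2) by nra. lra. }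
  set (Q := sqrt (Rabs k)).
  assert (HQ : Q*Q = Rabs k) by (apply sqrt_sqrt; apply Rabs_pos).
  assert (HQ0 : 0 <= Q) by apply sqrt_pos.
  assert (Hh2 : h^2 * 4 = D2 * (4 - D2)) by (rewrite HD2; nra).
  assert (Ht2 : t2 = t1 + e) by (unfold e; ring).
  assert (HE : E = X + Y + Q) by reflexivity.
  assert (HB : B = e + p) by reflexivity.
  rewrite HE, HB.
  assert (HD2r : D2 = r*r*(r*r)) by (rewrite Hr; auto).
  assert (Hha : Rabs h * Rabs h = h^2) by (rewrite <- Rabs_mult, Rabs_right; [ring| apply Rle_ge, Rle_0_sqr]).
  assert (Hh0 : 0 <= Rabs h) by apply Rabs_pos.
  split.
  -
    assert (HeXY : e <= X + Y).
    { assert (e*e <= (X+Y)*(X+Y)).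
      { assert (0 <= t1*(t1+e)*D2) by (apply Rmult_le_pos; nra). nra. }
      nra. }
    destruct (Rle_dec 1 D) as [H1|H1].
    + assert (p <= X + Y).
      { assert (p*p <= (X+Y)*(X+Y)).
        { assert (p*p = t1*t1*D) by (unfold p; rewrite <- Hr; ring).
          assert (t1*t1*D <= t1*(t1+e)*D2).
          { rewrite <- HD. assert (0 <= t1*t1) by nra.
            assert (t1*t1*D <= t1*t1*(D*D)) by nra.
            assert (0 <= t1*e*(D*D)) by (apply Rmult_le_pos; [apply Rmult_le_pos; lra| nra]). nra. }
          nra. }
        nra. }
      lra.
    + assert (p <= 2*Q).
      { assert (Rabs h * 2 >= D).
        { assert (HD1 : D < 1) by lra. assert (D*D <= 1) by nra. assert (0 <= D*D) by nra.
          assert (h^2*4 >= D*D) by (rewrite Hh2, <- HD; nra). nra. }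
        assert (p*p <= 4*(Q*Q)).
        { rewrite HQ, Hk. assert (Hpp : p*p = t1*t1*D) by (unfold p; rewrite <- Hr; ring).
          rewrite Hpp, Ht2. assert (0 <= t1*t1) by nra. assert (0<= t1*e) by nra.
          assert (t1*t1*D <= t1*t1*(Rabs h * 2)) by nra.
          assert (0 <= t1*e*Rabs h) by nra. nra. }
        nra. }
      lra.
  -
    assert (HU1 : X + Y <= 3*(e+p)).
    { assert ((X+Y)*(X+Y) <= 9*((e+p)*(e+p))).
      { assert (Hxy0 : 0 <= (X-Y)*(X-Y)) by apply Rle_0_sqr.
        assert (H : (X+Y)*(X+Y) <= 2*(X*X+Y*Y)) by lra.
        rewrite HXY, HD2r in H.
        assert (r*r <= 2) by lra.
        assert (t1*t1*(r*r*(r*r)) <= 2*(p*p)).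
        { unfold p. assert (0 <= t1*t1*(r*r)*(2 - r*r)) by (apply Rmult_le_pos; [apply Rmult_le_pos; apply Rmult_le_pos|]; lra). lra. }
        assert (t1*e*(r*r*(r*r)) <= 3*(p*e)).
        { unfold p. assert (0 <= t1*e*r) by (apply Rmult_le_pos; [apply Rmult_le_pos|]; lra).
          assert (r*(r*r) <= 3) by (rewrite Hr; assert (0 <= (3/2 - r)*D) by (apply Rmult_le_pos; lra); lra).
          assert (0 <= t1*e*r*(3 - r*(r*r))) by (apply Rmult_le_pos; lra). lra. }
        nra. }
      nra. }
    assert (HU2 : Q <= e + p).
    { assert (Q*Q <= (e+p)*(e+p)).
      { rewrite HQ, Hk, Ht2.
        assert (Rabs h <= D).
        { assert (h^2*4 <= D*D*4) by (rewrite Hh2, <- HD; nra). nra. }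
        assert (0 <= t1*(t1+e)) by nra.
        assert (t1*(t1+e)*Rabs h <= t1*(t1+e)*D) by nra.
        assert (t1*(t1+e)*D = p*p + p*e*r) by (unfold p; rewrite <- Hr; ring).
        assert (p*e*r <= 2*(p*e)) by (assert (0 <= p*e) by nra; nra).
        nra. }
      nra. }
    lra.
Qed.

Theorem lemma3p3 :
  exists C : R, 0 < C /\
    forall (s1 s2 : R * R) (t1 t2 : R),
      on_S1 s1 -> on_S1 s2 -> 0 <= t1 -> 0 <= t2 ->
      let b := Rabs (t1 - t2)
               + Rmin t1 t2 * sqrt (norm2 (fst s1 - fst s2, snd s1 - snd s2)) in
      / C * b <= dH (lift s1 t1) (lift s2 t2) /\
      dH (lift s1 t1) (lift s2 t2) <= C * b.
Proof.
  exists 4. split; [lra|].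
  intros [a b] [c d] t1 t2 H1 H2 Ht1 Ht2 bb.
  unfold on_S1 in H1, H2; simpl in H1, H2.
  unfold bb, dH, lift, norm2; simpl.
  destruct (Rle_dec t1 t2) as [H|H].
  - rewrite Rmin_left by lra. rewrite Rabs_minus_sym, Rabs_right by lra.
    destruct (core a b c d t1 t2) as [L U]; auto. split; lra.
  - rewrite Rmin_right by lra. rewrite Rabs_right by lra.
    destruct (core c d a b t2 t1) as [L U]; auto; try lra.
    replace ((c - a) * ((c - a) * 1) + (d - b) * ((d - b) * 1)) with
      ((a - c) * ((a - c) * 1) + (b - d) * ((b - d) * 1)) in L, U by ring.
    rewrite (Rabs_minus_sym (c*t2)), (Rabs_minus_sym (d*t2)) in L, U.
    replace (0 - 0 + / 2 * (c * t2 * (b * t1) - a * t1 * (d * t2))) with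
      (- (0 - 0 + / 2 * (a * t1 * (d * t2) - c * t2 * (b * t1)))) in L, U by ring.
    rewrite Rabs_Ropp in L, U. split; lra.
Qed.
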